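(* Consider the D2EAL algorithm (without periodic reset) described in the context with horizon $T\ge1$ and $\eta_\alpha,\eta_w>0$, and fix $i\in[N]$. Assume: (Assumption 1) $\Omega_i(t)\subseteq\Omega_i(t-1)$ for all $t=1,\dots,T$; (Assumption 2) $|l(x_1,y)-l(x_2,y)|\le L_1\|x_1-x_2\|$ for all $x_1,x_2\in\mathcal A$, $y\in\mathcal Y$, for some constant $L_1\ge0$; (Assumption 3) there are nonnegative numbers $\delta_1,\dots,\delta_T$ with $\|f_{t,k}-f_{t,j}\|\le\delta_t$ for all $k,j\in[N]$, $t=1,\dots,T$. Let $\Delta_o\ge\sum_{t=1}^T\delta_t$ and $i^*\in\arg\min_{j\in[N]}L_{T,j}$. Then $$R_i^{BE}(T):=\hat L_{T,i}-L_{T,i^*}\le\frac{\eta_wT}{8}+\frac{\log d_i(0)}{\eta_w}+\frac{\eta_\alpha T}{8}+\frac{\log 2}{\eta_\alpha}+L_1\Delta_o.$$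
   Context: Setup. There are $N\ge 1$ agents indexed by $i\in[N]$ and a horizon $T\ge1$. The outcome space $\mathcal Y$ and action space $\mathcal A$ are convex subsets of $\mathbb R^n$, $\|\cdot\|$ is the Euclidean norm. The loss $l:\mathcal A\times\mathcal Y\to[0,1]$ is convex in its first argument. The target sequence $y_1,\dots,y_T\in\mathcal Y$ is arbitrary. For each agent $i$ and each $t\ge1$, an ''expert'' supplies an arbitrary prediction $f_{t,i}\in\mathcal A$ of $y_t$ (available at time $t-1$). Agents communicate over a time-varying undirected graph; $\Omega_i(t)$ is the set of neighbours of agent $i$ at time $t$, $\Lambda_i(t):=\Omega_i(t)\cup\{i\}$ and $d_i(t):=|\Lambda_i(t)|$. D2EAL (without periodic reset). Initialize $\hat f_{0,i}=f_{1,i}$, $\hat\alpha_i(0)=\hat\alpha'_i(0)=\hat w_{ii}(0)=1$ for all $i$. For $t=0,1,\dots,T-1$, each agent $i$ computes: $\alpha_i(t)=\hat\alpha_i(t)/(\hat\alpha_i(t)+\hat\alpha'_i(t))$; individual prediction $\bar f_{t+1,i}=\alpha_i(t)f_{t+1,i}+(1-\alpha_i(t))\hat f_{t,i}$; social weights $w_{ij}(t)=\hat w_{jj}(t)/\sum_{j'\in\Lambda_i(t)}\hat w_{j'j'}(t)$ for $j\in\Lambda_i(t)$ and $w_{ij}(t)=0$ otherwise; social prediction $\hat f_{t+1,i}=\sum_{j\in\Lambda_i(t)}w_{ij}(t)\bar f_{t+1,j}$. After $y_{t+1}$ is revealed, define the losses $l_{t+1,i}=l(f_{t+1,i},y_{t+1})$,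 $\hat l^-_{t+1,i}=l(\hat f_{t,i},y_{t+1})$, $\bar l_{t+1,i}=l(\bar f_{t+1,i},y_{t+1})$, $\hat l_{t+1,i}=l(\hat f_{t+1,i},y_{t+1})$, and update $\hat\alpha_i(t+1)=\hat\alpha_i(t)e^{-\eta_\alpha l_{t+1,i}}$, $\hat\alpha'_i(t+1)=\hat\alpha'_i(t)e^{-\eta_\alpha \hat l^-_{t+1,i}}$, $\hat w_{ii}(t+1)=\hat w_{ii}(t)e^{-\eta_w\bar l_{t+1,i}}$. Cumulative losses: $L_{T,i}=\sum_{t=1}^T l_{t,i}$, $\hat L^-_{T,i}=\sum_{t=1}^T\hat l^-_{t,i}$, $\bar L_{T,i}=\sum_{t=1}^T\bar l_{t,i}$, $\hat L_{T,i}=\sum_{t=1}^T\hat l_{t,i}$. *)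

(* Defs.v *)
From HB Require Import structures.
From mathcomp Require Import all_boot all_order all_algebra.
From mathcomp Require Import reals sequences exp.
Set Implicit Arguments. Unset Strict Implicit. Unset Printing Implicit Defensive.
Import Order.TTheory GRing.Theory Num.Theory.
Local Open Scope ring_scope.

Section D2EAL.
Variables (R : realType) (N n : nat).

Definition enorm (x : 'rV[R]_n) : R := Num.sqrt (\sum_(k < n) (x ord0 k) ^+ 2).

Definition convex_set (S : 'rV[R]_n -> Prop) : Prop :=
  forall x1 x2 (lam : R), S x1 -> S x2 -> 0 <= lam <= 1 ->
    S (lam *: x1 + (1 - lam) *: x2).

Variables (eta_a eta_w : R)
  (l : 'rV[R]_n -> 'rV[R]_n -> R)          (* loss l(action, outcome) *)
  (f : nat -> 'I_N -> 'rV[R]_n)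
  (y : nat -> 'rV[R]_n)
  (Omega : nat -> 'I_N -> {set 'I_N}).

Definition Lambda (t : nat) (i : 'I_N) : {set 'I_N} := i |: Omega t i.
Definition deg (t : nat) (i : 'I_N) : nat := #|Lambda t i|.

(* state at time t: hat alpha_i(t), hat alpha'_i(t), hat w_ii(t), hat f_{t,i} *)
Record state := State {
  s_alpha : 'I_N -> R;
  s_alpha' : 'I_N -> R;
  s_w : 'I_N -> R;
  s_fhat : 'I_N -> 'rV[R]_n }.

Definition init_state : state :=
  State (fun _ => 1) (fun _ => 1) (fun _ => 1) (fun i => f 1 i).

Definition alpha (s : state) (i : 'I_N) : R :=
  s_alpha s i / (s_alpha s i + s_alpha' s i).

Definition fbar (s : state) (t : nat) (i : 'I_N) : 'rV[R]_n :=
  alpha s i *: f t.+1 i + (1 - alpha s i) *: s_fhat s i.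

Definition wgt (s : state) (t : nat) (i j : 'I_N) : R :=
  if j \in Lambda t i then s_w s j / (\sum_(j' in Lambda t i) s_w s j') else 0.

Definition fhat_next (s : state) (t : nat) (i : 'I_N) : 'rV[R]_n :=
  \sum_(j in Lambda t i) wgt s t i j *: fbar s t j.

Definition step (s : state) (t : nat) : state :=
  State (fun i => s_alpha s i * expR (- (eta_a * l (f t.+1 i) (y t.+1))))
        (fun i => s_alpha' s i * expR (- (eta_a * l (s_fhat s i) (y t.+1))))
        (fun i => s_w s i * expR (- (eta_w * l (fbar s t i) (y t.+1))))
        (fhat_next s t).

Fixpoint state_at (t : nat) : state :=
  if t is t'.+1 then step (state_at t') t' else init_state.

Definition fhat (t : nat) (i : 'I_N) : 'rV[R]_n := s_fhat (state_at t) i.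

Definition L_expert (T : nat) (i : 'I_N) : R :=
  \sum_(1 <= t < T.+1) l (f t i) (y t).
Definition L_hat (T : nat) (i : 'I_N) : R :=
  \sum_(1 <= t < T.+1) l (fhat t i) (y t).

End D2EAL.

(* Main.v *)
Require Import Defs.
From HB Require Import structures.
From mathcomp Require Import all_boot all_order all_algebra.
From mathcomp Require Import reals sequences exp.
From mathcomp Require Import all_classical all_reals all_analysis.
From mathcomp Require Import ring lra.
Require Import Defs.
Import Order.TTheory GRing.Theory Num.Theory.
Import numFieldNormedType.Exports.
Local Open Scope ring_scope.
Set Implicit Arguments. Unset Strict Implicit. Unset Printing Implicit Defensive.

Section Calc.
Variable R : realType.

Lemma isd_comp (f g : R -> R) (x df dg : R) :
  is_derive x 1 f df -> is_derive (f x) 1 g dg ->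
  is_derive x 1 (fun y => g (f y)) (dg * df).
Proof.
move=> hf hg.
have d1 : derivable f x 1 by case: hf.
have d2 : derivable g (f x) 1 by case: hg.
apply: DeriveDef.
  apply/derivable1_diffP; apply: differentiable_comp.
    exact/derivable1_diffP.
  exact/derivable1_diffP.
have := derive1_comp d1 d2.
rewrite !derive1E => ->.
by rewrite !derive_val.
Qed.

Lemma isd_inv (f : R -> R) (x df : R) :
  f x != 0 -> is_derive x 1 f df ->
  is_derive x 1 (fun y => (f y)^-1) (- (f x) ^- 2 * df).
Proof.
move=> fx0 hf.
have d1 : derivable f x 1 by case: hf.
apply: DeriveDef; first exact: derivableV.
by rewrite deriveV // derive_val.
Qed.

Lemma isd_add (f g : R -> R) (x df dg : R) :
  is_derive x 1 f df -> is_derive x 1 g dg ->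
  is_derive x 1 (fun y => f y + g y) (df + dg).
Proof. move=> hf hg; exact: (is_deriveD hf hg). Qed.

Lemma isd_mul (f g : R -> R) (x df dg : R) :
  is_derive x 1 f df -> is_derive x 1 g dg ->
  is_derive x 1 (fun y => f y * g y) (f x * dg + g x * df).
Proof. move=> hf hg; exact: (is_deriveM hf hg). Qed.

Lemma isd_cst (a x : R) : is_derive x 1 (fun _ => a) 0.
Proof. exact: is_derive_cst. Qed.

Lemma isd_id (x : R) : is_derive x 1 (fun y => y) 1.
Proof. exact: is_derive_id. Qed.


Lemma isd_expN (x : R) : is_derive x 1 (fun y => expR (- y)) (- expR (- x)).
Proof.
have h := isd_comp (is_deriveNid x 1) (is_derive_expR (- x)).
apply: is_derive_eq h _; by rewrite mulrN1.
Qed.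

Lemma cont_of (f : R -> R) (df : R -> R) : (forall x : R, is_derive x 1 f (df x)) ->
  continuous f.
Proof.
move=> h x; have d1 : derivable f x 1 by case: (h x).
exact/differentiable_continuous/derivable1_diffP.
Qed.

Lemma d1_of (f : R -> R) (df : R) (x : R) : is_derive x 1 f df -> f^`()%classic x = df.
Proof. by move=> h; rewrite derive1E derive_val. Qed.

Lemma hoeff2 (m e : R) : 0 <= m -> m <= 1 -> 0 <= e ->
  1 - m + m * expR (- e) <= expR (- (m * e) + e ^+ 2 / 8).
Proof.
move=> m0 m1 e0.
pose E (y : R) := expR (- y).
pose D (y : R) : R := 1 - m + m * E y.
have Dpos y : 0 < D y.
  rewrite /D; have Ep : 0 < E y by exact: expR_gt0.
  have [m1'|m1'] := ltP m 1.
    have := mulr_ge0 m0 (ltW Ep); lra.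
  have -> : m = 1 by apply/eqP; rewrite eq_le m1 m1'.
  by rewrite subrr add0r mul1r.
pose q (y : R) : R := m * E y / D y.
pose G (y : R) : R := m - q y - y / 4.
pose F (y : R) : R := ln (D y) + m * y - y ^+ 2 / 8.
have dD (x : R) : is_derive x 1 D (- (m * E x)).
  rewrite /D /E; apply: (is_derive_eq (isd_add (isd_cst (1 - m) x) (isd_mul (isd_cst m x) (isd_expN x)))).
  rewrite /E; ring.
have dq (x : R) : is_derive x 1 q (q x ^+ 2 - q x).
  rewrite {1}/q; apply: (is_derive_eq (isd_mul (isd_mul (isd_cst m x) (isd_expN x)) (isd_inv (lt0r_neq0 (Dpos x)) (dD x)))).
  rewrite /q /E; field; exact: lt0r_neq0 (Dpos x).
have dG (x : R) : is_derive x 1 G (q x - q x ^+ 2 - 1 / 4).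
  rewrite {1}/G; apply: (is_derive_eq (isd_add (isd_add (isd_cst m x) (is_deriveN (dq x)))
            (is_deriveN (isd_mul (isd_id x) (isd_cst (4^-1) x))))).
  ring.
have Gle y : 0 <= y -> G y <= 0.
  move=> y0.
  have -> : 0 = G 0 by rewrite /G /q /D /E oppr0 expR0 mulr1 subrK divr1 subrr mul0r subr0.
  apply: (@ler0_derive1_nincry R G 0 _ _ _ 0 y (lexx 0) y0).
  - by move=> z _; case: (dG z).
  - move=> z _; rewrite (d1_of (dG z)).
    have -> : q z - q z ^+ 2 - 1/4 = - (q z - 2^-1) ^+ 2 by field.
    by rewrite oppr_le0 sqr_ge0.
  - exact/continuous_subspaceT/(cont_of dG).
have dF (x : R) : is_derive x 1 F (G x).
  rewrite {1}/F; apply: (is_derive_eq (isd_add (isd_add (isd_comp (dD x) (is_derive1_ln (Dpos x)))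
       (isd_mul (isd_cst m x) (isd_id x))) (is_deriveN (isd_mul (isd_mul (isd_id x) (isd_id x)) (isd_cst (8^-1) x))))).
  rewrite /G /q; field; exact: lt0r_neq0 (Dpos x).
have Fle : F e <= 0.
  have -> : 0 = F 0 by rewrite /F /D /E oppr0 expR0 mulr1 subrK ln1 mulr0 expr0n /= mul0r !subr0 addr0.
  apply: (@ler0_derive1_nincry R F 0 _ _ _ 0 e (lexx 0) e0).
  - by move=> z _; case: (dF z).
  - move=> z; rewrite in_itv /= andbT => z0; rewrite (d1_of (dF z)); exact: Gle (ltW z0).
  - exact/continuous_subspaceT/(cont_of dF).
have : ln (D e) <= - (m * e) + e ^+ 2 / 8 by move: Fle; rewrite /F; lra.
rewrite -ler_expR lnK ?posrE //.
Qed.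



Lemma exp_chord (e x : R) : 0 <= x -> x <= 1 ->
  expR (- (e * x)) <= 1 - x + x * expR (- e).
Proof.
move=> x0 x1.
have := @convex_expR R (Itv01 x0 x1) (- e) 0.
rewrite /= !convRE /= expR0 mulr0 addr0 mulr1.
by rewrite mulrN mulrC addrC.
Qed.

Lemma hoeff_seq (I : Type) (s : seq I) (p x : I -> R) (e : R) :
  0 <= e -> (forall j, 0 <= p j) -> (forall j, 0 <= x j <= 1) ->
  0 < \sum_(j <- s) p j ->
  \sum_(j <- s) p j * expR (- (e * x j)) <=
  (\sum_(j <- s) p j) *
     expR (- (e * ((\sum_(j <- s) p j * x j) / \sum_(j <- s) p j)) + e ^+ 2 / 8).
Proof.
move=> e0 p0 x01 W0.
set W := \sum_(j <- s) p j; set M := \sum_(j <- s) p j * x j.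
have h1 : \sum_(j <- s) p j * expR (- (e * x j)) <=
          \sum_(j <- s) (p j - p j * x j + p j * x j * expR (- e)).
  apply: ler_sum => j _; have /andP[xa xb] := x01 j.
  have := exp_chord e xa xb => h.
  have -> : p j - p j * x j + p j * x j * expR (- e) = p j * (1 - x j + x j * expR (- e)) by ring.
  exact (Num.Theory.ler_wpM2l (p0 j) h).
apply: (le_trans h1).
rewrite big_split /= sumrB -mulr_suml -/W -/M.
have M0 : 0 <= M by apply: sumr_ge0 => j _; have /andP[xa _] := x01 j; exact: mulr_ge0.
have MW : M <= W by apply: ler_sum => j _; have /andP[_ xb] := x01 j; rewrite -{2}(mulr1 (p j)); exact: Num.Theory.ler_wpM2l.
have Wn : W != 0 by exact: lt0r_neq0.
have -> : W - M + M * expR (- e) = W * (1 - M / W + M / W * expR (- e)) by field.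
apply: Num.Theory.ler_wpM2l; first exact: ltW.
rewrite [e * _]mulrC; apply: hoeff2 => //.
  exact: divr_ge0 (ltW W0).
by rewrite ler_pdivrMr // mul1r.
Qed.

Lemma conv_seq (n : nat) (A Y : 'rV[R]_n -> Prop) (l : 'rV[R]_n -> 'rV[R]_n -> R)
  (hA : convex_set A)
  (hlconv : forall x1 x2 z (lam : R), A x1 -> A x2 -> Y z -> 0 <= lam <= 1 ->
     l (lam *: x1 + (1 - lam) *: x2) z <= lam * l x1 z + (1 - lam) * l x2 z)
  (I : Type) (s : seq I) (w : I -> R) (v : I -> 'rV[R]_n) :
  (forall j, 0 < w j) -> (forall j, A (v j)) -> (0 < size s)%N ->
  A ((\sum_(j <- s) w j)^-1 *: \sum_(j <- s) w j *: v j) /\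
  (forall z, Y z -> l ((\sum_(j <- s) w j)^-1 *: \sum_(j <- s) w j *: v j) z <=
       (\sum_(j <- s) w j)^-1 * \sum_(j <- s) w j * l (v j) z).
Proof.
move=> w0 vA; elim: s => [//|x s IH] _.
have [->|sp] : s = [::] \/ (0 < size s)%N by case: s {IH}; [left|right].
  rewrite !big_cons !big_nil !addr0 scalerA mulVf ?scale1r; last exact: lt0r_neq0.
  split => // z _; rewrite big_cons big_nil addr0 mulrA mulVf ?mul1r //; exact: lt0r_neq0.
have [IHA IHl] := IH sp.
have W'0 : 0 < \sum_(j <- s) w j.
  move: sp; case: s {IH IHA IHl} => // x' s' _; rewrite big_cons.
  apply: (lt_le_trans (w0 x')); rewrite lerDl; apply: sumr_ge0 => j _; exact: ltW.
rewrite !(big_cons _ _ x).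
set W' := \sum_(j <- s) w j.
set S' := \sum_(j <- s) w j *: v j.
have wx := w0 x.
have Wn : w x + W' != 0 by apply: lt0r_neq0; exact: addr_gt0.
have W'n : W' != 0 by exact: lt0r_neq0.
set lam := w x / (w x + W').
have lam01 : 0 <= lam <= 1.
  apply/andP; split; first by apply: divr_ge0; [exact: ltW | apply: ltW; exact: addr_gt0].
  by rewrite ler_pdivrMr ?mul1r ?lerDl ?ltW // addr_gt0.
have eqp : (w x + W')^-1 *: (w x *: v x + S') = lam *: v x + (1 - lam) *: (W'^-1 *: S').
  rewrite scalerDr !scalerA; congr (_ + _); first by rewrite mulrC.
  congr (_ *: _); rewrite /lam; field; by apply/andP.
rewrite eqp; split; first exact: (hA _ _ _ (vA x) IHA lam01).
move=> z zY.
eapply le_trans; first exact (hlconv _ _ _ _ (vA x) IHA zY lam01).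
rewrite big_cons.
have h := IHl z zY.
have l1 : 0 <= 1 - lam by case/andP: lam01 => _ ?; rewrite subr_ge0.
eapply le_trans; first exact (lerD (lexx (lam * l (v x) z)) (Num.Theory.ler_wpM2l l1 h)).
rewrite le_eqVlt; apply/orP; left; apply/eqP; rewrite /lam -/W'; clearbody W'; field; by apply/andP.
Qed.

End Calc.

Unset Implicit Arguments.

Theorem corollary3 (R : realType) (N n : nat) (hN : (1 <= N)%N) (T : nat) (hT : (1 <= T)%N)
  (A Y : 'rV[R]_n -> Prop) (hA : convex_set A) (hY : convex_set Y)
  (l : 'rV[R]_n -> 'rV[R]_n -> R)
  (hl01 : forall x z, A x -> Y z -> 0 <= l x z <= 1)
  (hlconv : forall x1 x2 z (lam : R), A x1 -> A x2 -> Y z -> 0 <= lam <= 1 ->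
     l (lam *: x1 + (1 - lam) *: x2) z <= lam * l x1 z + (1 - lam) * l x2 z)
  (y : nat -> 'rV[R]_n) (hy : forall t, (1 <= t <= T)%N -> Y (y t))
  (f : nat -> 'I_N -> 'rV[R]_n) (hf : forall t k, (1 <= t)%N -> A (f t k))
  (Omega : nat -> 'I_N -> {set 'I_N})
  (hsym : forall t j k, (j \in Omega t k) = (k \in Omega t j))
  (eta_a eta_w : R) (heta_a : 0 < eta_a) (heta_w : 0 < eta_w)
  (i : 'I_N)
  (* Assumption 1 *)
  (hnest : forall t, (1 <= t <= T)%N -> Omega t i \subset Omega t.-1 i)
  (* Assumption 2 *)
  (L1 : R) (hL1 : 0 <= L1)
  (hlip : forall x1 x2 z, A x1 -> A x2 -> Y z ->
     `| l x1 z - l x2 z | <= L1 * enorm (x1 - x2))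
  (* Assumption 3 *)
  (delta : nat -> R) (hdelta0 : forall t, (1 <= t <= T)%N -> 0 <= delta t)
  (hdelta : forall t k j, (1 <= t <= T)%N -> enorm (f t k - f t j) <= delta t)
  (Delta_o : R) (hDelta : \sum_(1 <= t < T.+1) delta t <= Delta_o)
  (istar : 'I_N) (histar : forall j, L_expert l f y T istar <= L_expert l f y T j) :
  L_hat eta_a eta_w l f y Omega T i - L_expert l f y T istar <=
    eta_w * T%:R / 8 + ln ((deg Omega 0 i)%:R) / eta_w
    + eta_a * T%:R / 8 + ln 2 / eta_a + L1 * Delta_o.
Proof.
pose st := state_at eta_a eta_w l f y Omega.
have stS t : st t.+1 = step eta_a eta_w l f y Omega (st t) t by [].
have pos t : [/\ (forall j, 0 < s_alpha (st t) j), (forall j, 0 < s_alpha' (st t) j)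
    & (forall j, 0 < s_w (st t) j)].
  elim: t => [|t [h1 h2 h3]]; first by split => j /=; exact: ltr01.
  by rewrite stS; split => j /=; apply: mulr_gt0 => //; exact: expR_gt0.
have alpha01 t j : 0 <= alpha (st t) j <= 1.
  have [h1 h2 _] := pos t; have := h1 j; have := h2 j.
  rewrite /alpha => a2 a1; apply/andP; split.
    by apply: divr_ge0; [exact: ltW|apply: ltW; exact: addr_gt0].
  by rewrite ler_pdivrMr ?mul1r ?lerDl ?ltW // addr_gt0.
have Wpos t j : 0 < s_w (st t) j by have [_ _ h] := pos t.
have fhat_eq t j : s_fhat (st t.+1) j =
    (\sum_(k <- enum (Lambda Omega t j)) s_w (st t) k)^-1 *:
      \sum_(k <- enum (Lambda Omega t j)) s_w (st t) k *: fbar f (st t) t k.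
  rewrite stS /= /fhat_next /wgt !big_enum /= scaler_sumr.
  by apply: eq_bigr => k hk; rewrite hk scalerA mulrC.
have sizeL t j : (0 < size (enum (Lambda Omega t j)))%N.
  rewrite -cardE card_gt0; apply/set0Pn; exists j; exact: setU11.
have inA t : forall j, A (s_fhat (st t) j).
  elim: t => [|t IH] j; first exact: hf.
  rewrite fhat_eq.
  have [h _] := conv_seq hA hlconv (w := s_w (st t)) (v := fbar f (st t) t)
     (Wpos t) (fun k => hA _ _ _ (hf t.+1 k (isT : (0 < t.+1)%N)) (IH k) (alpha01 t k)) (sizeL t j).
  exact: h.
have fbarA t k : A (fbar f (st t) t k) :=
  hA _ _ _ (hf t.+1 k (isT : (0 < t.+1)%N)) (inA t k) (alpha01 t k).
have Yt t : (t < T)%N -> Y (y t.+1) by move=> tT; apply: hy; rewrite ltnS.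
pose SL t := \sum_(1 <= u < t.+1) l (f u i) (y u).
pose SB t := \sum_(1 <= u < t.+1) l (fbar f (st u.-1) u.-1 i) (y u).
pose SH t := \sum_(1 <= u < t.+1) l (s_fhat (st u) i) (y u).
have SBS t : SB t.+1 = SB t + l (fbar f (st t) t i) (y t.+1).
  by rewrite /SB big_nat_recr.
have SHS t : SH t.+1 = SH t + l (s_fhat (st t.+1) i) (y t.+1).
  by rewrite /SH big_nat_recr.
have alphaE t : s_alpha (st t) i = expR (- (eta_a * SL t)).
  elim: t => [|t IH]; first by rewrite /SL big_geq // mulr0 oppr0 expR0.
  rewrite stS /= IH /SL [in RHS]big_nat_recr //= -expRD; congr expR; ring.
have wE t : s_w (st t) i = expR (- (eta_w * SB t)).
  elim: t => [|t IH]; first by rewrite /SB big_geq // mulr0 oppr0 expR0.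
  rewrite stS /= IH /SB [in RHS]big_nat_recr //= -expRD; congr expR; ring.
have indiv t : (t <= T)%N -> s_alpha (st t) i + s_alpha' (st t) i <=
    2 * expR (- (eta_a * SB t) + t%:R * (eta_a ^+ 2 / 8)).
  elim: t => [_|t IH tT].
    by rewrite /SB big_geq //= mulr0 oppr0 mul0r addr0 expR0 mulr1.
  have {}IH := IH (ltnW tT).
  have [h1 h2 _] := pos t.
  set a := s_alpha (st t) i; set a' := s_alpha' (st t) i.
  set l1 := l (f t.+1 i) (y t.+1); set l2 := l (s_fhat (st t) i) (y t.+1).
  set lb := l (fbar f (st t) t i) (y t.+1).
  have Y1 := Yt t tT.
  have l1r : 0 <= l1 <= 1 by apply: hl01 => //; exact: hf.
  have l2r : 0 <= l2 <= 1 by apply: hl01 => //; exact: inA.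
  have H := hoeff_seq (s := [:: true; false]) (p := fun b : bool => if b then a else a')
    (x := fun b : bool => if b then l1 else l2) (ltW heta_a)
    (fun b => if b as b0 return 0 <= (if b0 then a else a') then ltW (h1 i) else ltW (h2 i))
    (fun b => if b as b0 return 0 <= (if b0 then l1 else l2) <= 1 then l1r else l2r).
  rewrite !big_cons !big_nil /= !addr0 in H.
  have {H} H := H (addr_gt0 (h1 i) (h2 i)).
  have hc : lb <= (a * l1 + a' * l2) / (a + a').
    have := hlconv (f t.+1 i) (s_fhat (st t) i) (y t.+1) (alpha (st t) i)
      (hf t.+1 i isT) (inA t i) Y1 (alpha01 t i).
    rewrite -/(fbar f (st t) t i) -/lb /alpha -/a -/a' => hh.
    have alg (b b' u v : R) : b + b' != 0 -> b/(b+b') * u + (1 - b/(b+b')) * v = (b*u + b'*v)/(b+b').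
      by move=> hb; field.
    by rewrite alg in hh; last exact: (lt0r_neq0 (addr_gt0 (h1 i) (h2 i))).
  rewrite stS /= -/a -/a' -/l1 -/l2.
  apply: (le_trans H).
  have e1 : expR (- (eta_a * ((a * l1 + a' * l2) / (a + a'))) + eta_a ^+ 2 / 8) <=
            expR (- (eta_a * lb) + eta_a ^+ 2 / 8).
    rewrite ler_expR lerD2r lerN2; exact (Num.Theory.ler_wpM2l (ltW heta_a) hc).
  apply: (le_trans (Num.Theory.ler_wpM2l (ltW (addr_gt0 (h1 i) (h2 i))) e1)).
  apply: (le_trans (Num.Theory.ler_wpM2r (ltW (expR_gt0 _)) IH)).
  rewrite SBS -/lb -mulrA -expRD le_eqVlt; apply/orP; left; apply/eqP.
  congr (_ * expR _); rewrite mulrSr; ring.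
have social t : (t <= T)%N -> \sum_(j in Lambda Omega t i) s_w (st t) j <=
    (deg Omega 0 i)%:R * expR (- (eta_w * SH t) + t%:R * (eta_w ^+ 2 / 8)).
  elim: t => [_|t IH tT].
    rewrite /SH big_geq //= mulr0 oppr0 mul0r addr0 expR0 mulr1 sumr_const.
    by rewrite /deg.
  have {}IH := IH (ltnW tT).
  have Y1 := Yt t tT.
  have sub : Lambda Omega t.+1 i \subset Lambda Omega t i.
    rewrite /Lambda finset.setUS //; exact: (hnest t.+1 tT).
  have e1 : \sum_(j in Lambda Omega t.+1 i) s_w (st t.+1) j <=
            \sum_(j in Lambda Omega t i) s_w (st t.+1) j.
    rewrite [X in _ <= X](big_setID (Lambda Omega t.+1 i)) /= (finset.setIidPr sub) lerDl.
    by apply: sumr_ge0 => j _; apply: mulr_ge0; [exact: ltW|exact: expR_ge0].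
  apply: (le_trans e1).
  rewrite stS /= -big_enum /=.
  set V := \sum_(k <- enum (Lambda Omega t i)) s_w (st t) k.
  have V0 : 0 < V.
    rewrite /V; move: (sizeL t i); case: (enum _) => // x s' _; rewrite big_cons.
    apply: (lt_le_trans (Wpos t x)); rewrite lerDl; apply: sumr_ge0 => j _; exact: ltW.
  have lbr j : 0 <= l (fbar f (st t) t j) (y t.+1) <= 1 by apply: hl01.
  have H := hoeff_seq (s := enum (Lambda Omega t i)) (p := s_w (st t))
    (x := fun j => l (fbar f (st t) t j) (y t.+1)) (ltW heta_w)
    (fun j => ltW (Wpos t j)) lbr V0.
  apply: (le_trans H).
  have [_ hc] := conv_seq hA hlconv (w := s_w (st t)) (v := fbar f (st t) t)
     (Wpos t) (fbarA t) (sizeL t i).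
  have {}hc := hc _ Y1.
  rewrite -fhat_eq -/V in hc.
  have e2 : expR (- (eta_w * ((\sum_(j <- enum (Lambda Omega t i)) s_w (st t) j *
               l (fbar f (st t) t j) (y t.+1)) / V)) + eta_w ^+ 2 / 8) <=
            expR (- (eta_w * l (s_fhat (st t.+1) i) (y t.+1)) + eta_w ^+ 2 / 8).
    rewrite ler_expR lerD2r lerN2 [_ / V]mulrC; exact (Num.Theory.ler_wpM2l (ltW heta_w) hc).
  apply: (le_trans (Num.Theory.ler_wpM2l (ltW V0) e2)).
  rewrite /V big_enum /=.
  apply: (le_trans (Num.Theory.ler_wpM2r (ltW (expR_gt0 _)) IH)).
  rewrite SHS -mulrA -expRD le_eqVlt; apply/orP; left; apply/eqP.
  congr (_ * expR _); rewrite mulrSr; ring.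
have dpos : (0 < deg Omega 0 i)%N.
  rewrite /deg card_gt0; apply/set0Pn; exists i; exact: setU11.
have dE : ((deg Omega 0 i)%:R : R) = expR (ln (deg Omega 0 i)%:R).
  by rewrite lnK // posrE ltr0n.
have twoE : (2 : R) = expR (ln 2) by rewrite lnK // posrE.
have wA : - (eta_w * SB T) <= ln (deg Omega 0 i)%:R + (- (eta_w * SH T) + T%:R * (eta_w ^+ 2 / 8)).
  rewrite -ler_expR expRD -dE -wE.
  apply: le_trans (social T (leqnn T)).
  rewrite (bigD1 i) /=; last exact: setU11.
  rewrite lerDl; apply: sumr_ge0 => j _; exact: ltW.
have aA : - (eta_a * SL T) <= ln 2 + (- (eta_a * SB T) + T%:R * (eta_a ^+ 2 / 8)).
  rewrite -ler_expR expRD -twoE -alphaE.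
  apply: le_trans (indiv T (leqnn T)).
  by have [_ h2 _] := pos T; rewrite lerDl; apply: ltW.
have lip : SL T - L_expert l f y T istar <= L1 * Delta_o.
  rewrite /SL /L_expert -sumrB.
  apply: le_trans (_ : _ <= L1 * \sum_(1 <= t < T.+1) delta t) _; last first.
    exact (Num.Theory.ler_wpM2l hL1 hDelta).
  rewrite mulr_sumr; apply: ler_sum_nat => t ht.
  have ht' : (1 <= t <= T)%N by rewrite -ltnS.
  apply: le_trans (ler_norm _) _.
  apply: le_trans (hlip _ _ _ (hf t i _) (hf t istar _) (hy t ht')) _.
    by case/andP: ht.
    by case/andP: ht.
  exact (Num.Theory.ler_wpM2l hL1 (hdelta t i istar ht')).
have -> : L_hat eta_a eta_w l f y Omega T i = SH T by [].
have k1 : SH T - SB T <= eta_w * T%:R / 8 + ln (deg Omega 0 i)%:R / eta_w.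
  rewrite -(ler_pM2l heta_w).
  have -> : eta_w * (eta_w * T%:R / 8 + ln (deg Omega 0 i)%:R / eta_w) =
      T%:R * (eta_w ^+ 2 / 8) + ln (deg Omega 0 i)%:R by field; exact: lt0r_neq0.
  rewrite mulrBr; lra.
have k2 : SB T - SL T <= eta_a * T%:R / 8 + ln 2 / eta_a.
  rewrite -(ler_pM2l heta_a).
  have -> : eta_a * (eta_a * T%:R / 8 + ln 2 / eta_a) =
      T%:R * (eta_a ^+ 2 / 8) + ln 2 by field; exact: lt0r_neq0.
  rewrite mulrBr; lra.
lra.
Qed.
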